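(* Let $I$ be the tridendriform ideal of $\mathcal{A}$ generated by $\{x\cdot y: x,y\in\mathcal{A}^+\}$. A tree $t$ of $\mathcal{A}$ is not binary (i.e. some internal vertex has at least three children) if and only if $t\in I$.
   Context: Trees: planar rooted trees in which every internal vertex has at least two children; the root vertex hangs from a trunk edge; leaves are edges without upper vertex; $|$ is the one-leaf tree; $\mathcal A$ is the $\mathbb K$-span of all trees, $\mathcal A^+$ that of trees $\neq|$. Products: $x_0\vee\cdots\vee x_k$ ($k\ge1$) grafts trees left to right on a new root; for $x=x^{(0)}\vee\cdots\vee x^{(k)}$, $y=y^{(0)}\vee\cdots\vee y^{(l)}$: $x\prec y=x^{(0)}\vee\cdots\vee x^{(k-1)}\vee(x^{(k)}*y)$, $x\cdot y=x^{(0)}\vee\cdots\vee x^{(k-1)}\vee(x^{(k)}*y^{(0)})\vee y^{(1)}\vee\cdots\vee y^{(l)}$, $x\succ y=(x*y^{(0)})\vee y^{(1)}\vee\cdots\vee y^{(l)}$, $*=\prec+\cdot+\succ$, $|*z=z*|=z$; for $a\in\mathcal A^+$: $|\prec a=0$, $a\prec|=a$, $|\succ a=a$, $a\succ|=0$, $|\cdot a=a\cdot|=0$. A tridendriform ideal is a subspace $J$ such that $x\ltimes y\in J$ whenever $x\in J$ or $y\in J$, for $\ltimes\in\{\prec,\cdot,\succ\}$; the ideal generated by a set is the smallest tridendriform ideal containing it. *)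

(* Defs.v *)
From HB Require Import structures.
From mathcomp Require Import all_boot all_algebra.
From mathcomp Require Import finmap.
From mathcomp.multinomials Require Import monalg.

Set Implicit Arguments.
Unset Strict Implicit.
Unset Printing Implicit Defensive.

Import GRing.Theory.
Local Open Scope ring_scope.

(* Raw planar rooted trees.  [Node [::]] is the one-leaf tree |, and  *)
(* [Node [:: x0; ...; xk]] is x0 \/ ... \/ xk (grafting on a new root).*)
Inductive tree := Node of seq tree.

Notation tleaf := (Node [::]).

Fixpoint tree_enc (t : tree) : GenTree.tree unit :=
  match t with Node ts => GenTree.Node 0 (map tree_enc ts) end.

Fixpoint tree_dec (g : GenTree.tree unit) : tree :=
  match g with
  | GenTree.Leaf _ => Node [::]
  | GenTree.Node _ gs => Node (map tree_dec gs)
  end.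

Fixpoint tree_encK (t : tree) : tree_dec (tree_enc t) = t :=
  match t with
  | Node ts =>
    f_equal Node
      ((fix aux (l : seq tree) : map tree_dec (map tree_enc l) = l :=
          match l with
          | [::] => erefl
          | x :: l' => f_equal2 cons (tree_encK x) (aux l')
          end) ts)
  end.

HB.instance Definition _ := Countable.copy tree (can_type tree_encK).

Fixpoint tsize (t : tree) : nat :=
  match t with Node ts => (sumn (map tsize ts)).+1 end.

Fixpoint valid_tree (t : tree) : bool :=
  match t with Node ts => (size ts != 1%N) && all valid_tree ts end.

Fixpoint has_wide_vertex (t : tree) : bool :=
  match t with Node ts => (2 < size ts)%N || has has_wide_vertex ts end.

Section Ops.
Variable K : fieldType.

(* The K-span of (raw) trees; A is the subspace spanned by valid trees. *)
Definition TA := {malg K[tree]}.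

Definition basis (t : tree) : TA := << (1 : K) *g t >>.

Definition lin_ext (f : tree -> TA) (v : TA) : TA :=
  \sum_(t <- msupp v) v@_t *: f t.

Definition inA (v : TA) : Prop := forall t, t \in msupp v -> valid_tree t.
Definition inAplus (v : TA) : Prop :=
  forall t, t \in msupp v -> valid_tree t /\ t <> tleaf.

(* The three operations on basis trees, computed with fuel n.
   Returns (x < y, x . y, x > y).  Convention for the undefined
   products | op | : value 0 (irrelevant for the statement). *)
Fixpoint ops (n : nat) (x y : tree) : TA * TA * TA :=
  match n with
  | 0%N => (0, 0, 0)
  | n'.+1 =>
    let star a b :=
      match a, b with
      | Node [::], _ => basis b
      | _, Node [::] => basis a
      | _, _ => let: (p, d, s) := ops n' a b in p + d + s
      end in
    match x, y with
    | Node [::], Node [::] => (0, 0, 0)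
    | Node [::], _ => (0, 0, basis y)
    | _, Node [::] => (basis x, 0, 0)
    | Node xs, Node ys =>
      let xk := last tleaf xs in
      let xs'' := behead (belast tleaf xs) in    (* x^(0) .. x^(k-1) *)
      let y0 := head tleaf ys in
      let ys' := behead ys in
      ( lin_ext (fun t => basis (Node (rcons xs'' t))) (star xk y),
        lin_ext (fun t => basis (Node (xs'' ++ t :: ys'))) (star xk y0),
        lin_ext (fun t => basis (Node (t :: ys'))) (star x y0) )
    end
  end.

Definition tprec_t (x y : tree) : TA := (ops (tsize x + tsize y) x y).1.1.
Definition tdot_t  (x y : tree) : TA := (ops (tsize x + tsize y) x y).1.2.
Definition tsucc_t (x y : tree) : TA := (ops (tsize x + tsize y) x y).2.

Definition bilin (f : tree -> tree -> TA) (u v : TA) : TA :=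
  \sum_(s <- msupp u) \sum_(t <- msupp v) (u@_s * v@_t) *: f s t.

Definition tprec := bilin tprec_t.
Definition tdot  := bilin tdot_t.
Definition tsucc := bilin tsucc_t.

Definition tridend_ideal (J : TA -> Prop) : Prop :=
  [/\ (forall v, J v -> inA v),
      J 0,
      (forall u v, J u -> J v -> J (u + v)),
      (forall (c : K) v, J v -> J (c *: v)) &
      (forall x y, J x -> inA y ->
        [/\ J (tprec x y), J (tdot x y), J (tsucc x y),
            J (tprec y x) & J (tdot y x)] /\ J (tsucc y x))].

Definition in_gen_ideal (S : TA -> Prop) (v : TA) : Prop :=
  forall J, tridend_ideal J -> (forall s, S s -> J s) -> J v.

Definition dot_gens (v : TA) : Prop :=
  exists x y, [/\ inAplus x, inAplus y & v = tdot x y].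

End Ops.

(* Main.v *)
Require Import Defs.
From HB Require Import structures.
From mathcomp Require Import all_boot all_algebra finmap.
From mathcomp.multinomials Require Import monalg.
Set Implicit Arguments. Unset Strict Implicit. Unset Printing Implicit Defensive.
Import GRing.Theory.
Local Open Scope ring_scope.

Section S.
Variable K : fieldType.
Definition allP (p : tree -> bool) (v : TA K) := forall t, t \in msupp v -> p t.

Lemma allP0 p : allP p 0.
Proof. by move=> t; rewrite msupp0 inE. Qed.

Lemma allPD p u v : allP p u -> allP p v -> allP p (u + v).
Proof.
move=> hu hv t /(fsubsetP (msuppD_le _ _)); rewrite in_fsetU => /orP[/hu|/hv] //.
Qed.

Lemma allPZ p c v : allP p v -> allP p (c *: v).
Proof. by move=> hv t /(fsubsetP (msuppZ_le _ _)) /hv. Qed.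

Lemma allP_sum p (I : eqType) (r : seq I) (F : I -> TA K) :
  (forall i, i \in r -> allP p (F i)) -> allP p (\sum_(i <- r) F i).
Proof.
move=> h; rewrite big_seq; apply: (big_ind (allP p)) => //.
- exact: allP0.
- exact: allPD.
Qed.

Lemma msupp_basis t : msupp (basis K t) = [fset t]%fset.
Proof. by rewrite /basis msuppU oner_eq0. Qed.

Lemma allP_basis (p : pred tree) t : p t -> allP p (basis K t).
Proof. by move=> h s; rewrite msupp_basis inE => /eqP ->. Qed.

Lemma allP_lin p f v : (forall t, t \in msupp v -> allP p (f t)) -> allP p (lin_ext f v).
Proof. move=> h; apply: allP_sum => i hi; apply: allPZ; exact: h. Qed.

Lemma allP_bilin p f u v : (forall s t, s \in msupp u -> t \in msupp v -> allP p (f s t)) ->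
  allP p (bilin f u v).
Proof. move=> h; apply: allP_sum => i hi; apply: allP_sum => j hj; apply: allPZ; exact: h. Qed.

Lemma lin_ext_basis f t : lin_ext f (basis K t) = f t.
Proof. by rewrite /lin_ext msupp_basis big_seq_fset1 /basis mcoeffUU scale1r. Qed.

Lemma bilin_basis f s t : bilin f (basis K s) (basis K t) = f s t.
Proof. by rewrite /bilin msupp_basis !big_seq_fset1 msupp_basis big_seq_fset1 /basis !mcoeffUU mulr1 scale1r. Qed.

Lemma allP_mono (p q : pred tree) v : (forall s, p s -> q s) -> allP p v -> allP q v.
Proof. by move=> h hv t /hv /h. Qed.

Definition star n (a b : tree) : TA K := match a, b with
 | Node [::], _ => basis K b
 | _, Node [::] => basis K a
 | _, _ => let: (p, d, s) := ops K n a b in p + d + s end.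

Lemma opsE n x1 xs1 y1 ys1 : ops K n.+1 (Node (x1::xs1)) (Node (y1::ys1)) =
  (lin_ext (fun t => basis K (Node (rcons (belast x1 xs1) t))) (star n (last x1 xs1) (Node (y1::ys1))),
   lin_ext (fun t => basis K (Node (belast x1 xs1 ++ t :: ys1))) (star n (last x1 xs1) y1),
   lin_ext (fun t => basis K (Node (t :: ys1))) (star n (Node (x1::xs1)) y1)).
Proof. by []. Qed.

Definition Pg x y := fun s => valid_tree s && ((has_wide_vertex x || has_wide_vertex y) ==> has_wide_vertex s).
Definition VW s := valid_tree s && has_wide_vertex s.

Lemma ops_good n : forall x y, valid_tree x -> valid_tree y ->
 [/\ allP (Pg x y) (ops K n x y).1.1, allP VW (ops K n x y).1.2 & allP (Pg x y) (ops K n x y).2].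
Proof.
elim: n => [|n IH] x y vx vy.
  by split; apply: allP0.
have star_ok : forall a b, valid_tree a -> valid_tree b -> allP (Pg a b) (star n a b).
  move=> [[|a1 as1]] [[|b1 bs1]] va vb /=.
  - by apply: allP_basis.
  - by apply: allP_basis; rewrite /Pg vb implybb.
  - by apply: allP_basis; rewrite /Pg va /= orbF implybb.
  case: (IH (Node (a1::as1)) (Node (b1::bs1)) va vb).
  case: (ops K n _ _) => [[p d] s] /= h1 h2 h3.
  apply: allPD; [apply: allPD|] => //.
  by apply: allP_mono h2 => t; rewrite /VW /Pg => /andP[-> ->]; rewrite implybT.
move: x y vx vy => [[|x1 xs1]] [[|y1 ys1]] vx vy.
- by split; apply: allP0.
- simpl; by split; try apply: allP0; apply: allP_basis; rewrite /Pg vy implybb.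
- simpl; by split; try apply: allP0; apply: allP_basis; rewrite /Pg vx /= orbF implybb.
rewrite opsE.
have vX := vx; have vY := vy.
rewrite (lastI x1 xs1) /= all_rcons size_rcons size_belast in vx.
move: vx vy => /andP[sx /andP[vxk vxs0]] /= /andP[sy /andP[vy1 vys1]].
split.
- apply: allP_lin => t /(star_ok _ _ vxk vY) /andP[vt wt].
  apply: allP_basis; rewrite /Pg (lastI x1 xs1) /= !all_rcons !size_rcons size_belast sx vt vxs0 /=.
  rewrite !has_rcons; move: wt; rewrite /=.
  by move: (2 < (size xs1).+1)%N (has_wide_vertex (last x1 xs1)) (has has_wide_vertex (belast x1 xs1)) (2 < (size ys1).+1)%N (has_wide_vertex y1) (has has_wide_vertex ys1) (has_wide_vertex t) => [] [] [] [] [] [] [].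
- apply: allP_lin => t /(star_ok _ _ vxk vy1) /andP[vt wt].
  apply: allP_basis; rewrite /VW /= all_cat /= vt vxs0 vys1 size_cat /= size_belast.
  move: sy; case: ys1 {vys1 vY} => // ? ? _; rewrite /= andbT.
  move: sx; case: xs1 {vxs0 vxk vX wt} => // ? ? _.
  by rewrite /= !addnS.
- apply: allP_lin => t /(star_ok _ _ vX vy1) /andP[vt wt].
  apply: allP_basis; rewrite /Pg /= vt vys1 sy /=.
  move: wt; rewrite /=.
  by move: [|| (2 < (size xs1).+1)%N, has_wide_vertex x1 | has has_wide_vertex xs1] (2 < (size ys1).+1)%N (has_wide_vertex y1) (has has_wide_vertex ys1) (has_wide_vertex t) => [] [] [] [] [].
Qed.

Lemma tsizeS a b : exists m, (Defs.tsize a + Defs.tsize b = m.+1)%N.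
Proof. by case: a => ts; exists (sumn (map Defs.tsize ts) + Defs.tsize b); rewrite addSn. Qed.

Lemma inA_basis t : valid_tree t -> inA (basis K t).
Proof. exact: (@allP_basis valid_tree). Qed.

Lemma fwd (J : TA K -> Prop) : tridend_ideal J -> (forall s, dot_gens s -> J s) ->
  forall n t, (Defs.tsize t <= n)%N -> valid_tree t -> has_wide_vertex t -> J (basis K t).
Proof.
move=> hJ hS; case: (hJ) => _ _ _ _ hop.
elim=> [|n IH] [ts] //= hs /andP[s1 vts] w.
case: ts hs s1 vts w => [|c0 [|c1 [|c2 rest]]] //= hs s1 vts w.
- move: vts => /and3P[v0 v1 _].
  have hs0 : (Defs.tsize c0 <= n)%N by move: hs; rewrite ltnS; apply: leq_trans; rewrite leq_addr.
  have hs1 : (Defs.tsize c1 <= n)%N by move: hs; rewrite ltnS addn0; apply: leq_trans; rewrite leq_addl.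
  clear hs; case/orP: w => [w0|/orP[w1|//]].
  + move: w0 v0 hs0; case: c0 => [[|a1 as1]] // w0 v0 hs0.
    have J0 := IH _ hs0 v0 w0.
    have A1 : inA (basis K (Node [:: tleaf; c1])) by apply: inA_basis; rewrite /= v1.
    case: (hop _ _ J0 A1) => [[_ _ H _ _] _].
    move: H; rewrite /tsucc bilin_basis /tsucc_t.
    case: (tsizeS (Node (a1 :: as1)) (Node [:: tleaf; c1])) => m ->.
    by rewrite opsE /= lin_ext_basis.
  + move: w1 v1 hs1; case: c1 => [[|b1 bs1]] // w1 v1 hs1.
    have J1 := IH _ hs1 v1 w1.
    have A0 : inA (basis K (Node [:: c0; tleaf])) by apply: inA_basis; rewrite /= v0.
    case: (hop _ _ J1 A0) => [[_ _ _ H _] _].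
    move: H; rewrite /tprec bilin_basis /tprec_t.
    case: (tsizeS (Node [:: c0; tleaf]) (Node (b1 :: bs1))) => m ->.
    by rewrite opsE /= lin_ext_basis.
- apply: hS.
  move: vts => /andP[v0 vr].
  exists (basis K (Node [:: c0; tleaf])), (basis K (Node [:: c1, c2 & rest])); split.
  + by move=> u; rewrite msupp_basis inE => /eqP ->; rewrite /= v0.
  + by move=> u; rewrite msupp_basis inE => /eqP ->; rewrite /= vr.
  rewrite /tdot bilin_basis /tdot_t.
  case: (tsizeS (Node [:: c0; tleaf]) (Node [:: c1, c2 & rest])) => m ->.
  by rewrite opsE /= lin_ext_basis.
Qed.

Lemma bwd_ideal : tridend_ideal (allP VW).
Proof.
split.
- by move=> v hv; apply: allP_mono hv => t /andP[].
- exact: allP0.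
- by move=> u v; apply: allPD.
- by move=> c v; apply: allPZ.
move=> x y hx hy.
have H1 : forall s t, s \in msupp x -> t \in msupp y -> VW s /\ valid_tree t.
  by move=> s t /hx hs /hy.
have PgL : forall s t u, VW s -> Pg s t u -> VW u.
  by move=> s t u; rewrite /VW /Pg => /andP[_ ws] /andP[vu]; rewrite vu ws.
have PgR : forall s t u, VW s -> Pg t s u -> VW u.
  by move=> s t u; rewrite /VW /Pg => /andP[_ ws] /andP[vu]; rewrite vu ws orbT.
split; [split|];
  apply: allP_bilin => s t hs ht.
- case: (H1 _ _ hs ht) => /[dup] ws /andP[vs _] vt.
  by case: (ops_good (Defs.tsize s + Defs.tsize t) vs vt) => h _ _; apply: allP_mono h => u; apply: PgL.
- case: (H1 _ _ hs ht) => /[dup] ws /andP[vs _] vt.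
  by case: (ops_good (Defs.tsize s + Defs.tsize t) vs vt) => _ h _.
- case: (H1 _ _ hs ht) => /[dup] ws /andP[vs _] vt.
  by case: (ops_good (Defs.tsize s + Defs.tsize t) vs vt) => _ _ h; apply: allP_mono h => u; apply: PgL.
- case: (H1 _ _ ht hs) => /[dup] wt /andP[vt _] vs.
  by case: (ops_good (Defs.tsize s + Defs.tsize t) vs vt) => h _ _; apply: allP_mono h => u; apply: PgR.
- case: (H1 _ _ ht hs) => /[dup] wt /andP[vt _] vs.
  by case: (ops_good (Defs.tsize s + Defs.tsize t) vs vt) => _ h _.
- case: (H1 _ _ ht hs) => /[dup] wt /andP[vt _] vs.
  by case: (ops_good (Defs.tsize s + Defs.tsize t) vs vt) => _ _ h; apply: allP_mono h => u; apply: PgR.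
Qed.

End S.

Theorem mainTheorem18 (K : fieldType) (t : tree) :
  valid_tree t ->
  (has_wide_vertex t <-> in_gen_ideal (@dot_gens K) (basis K t)).
Proof.
move=> vt; split.
- move=> w J hJ hS; exact: (fwd hJ hS (leqnn _) vt w).
- move=> h; have := h _ (@bwd_ideal K).
  have : forall s, @dot_gens K s -> allP VW s.
    move=> s [x [y [hx hy ->]]]; apply: allP_bilin => a b ha hb.
    case: (hx _ ha) => va _; case: (hy _ hb) => vb _.
    by case: (ops_good K (Defs.tsize a + Defs.tsize b) va vb) => _ h2 _.
  by move=> hg /(_ hg) /(_ t); rewrite msupp_basis inE eqxx => /(_ isT) /andP[] _.
Qed.
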